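(* Let $N\ge2$. There does not exist any pure $(N-1)$-DI qubit assemblage $\sigma^{\mathrm{bit}}_{\boldsymbol a|\boldsymbol x}=P_{\boldsymbol A|\boldsymbol X}(\boldsymbol a|\boldsymbol x)\,|\psi(\boldsymbol a,\boldsymbol x)\rangle\langle\psi(\boldsymbol a,\boldsymbol x)|$, with $\boldsymbol a=(a_1,\dots,a_{N-1})$ and $\boldsymbol x=(x_1,\dots,x_{N-1})$ ranging over finite sets, that can be transformed via 1W-LOCCs into every qubit assemblage of minimal dimension $\{\sigma^{(\mathrm{target})}_{a|x}\}_{a,x\in\{0,1\}}$.
   Context: A pure $(N-1)$-DI qubit assemblage consists of a conditional probability distribution $P_{\boldsymbol A|\boldsymbol X}(\boldsymbol a|\boldsymbol x)$ of the outputs $\boldsymbol a$ of $N-1$ untrusted parties given their inputs $\boldsymbol x$, and unit vectors $|\psi(\boldsymbol a,\boldsymbol x)\rangle\in\mathbb C^2$ of a trusted party, such that no-signaling holds between the trusted party and the untrusted ones: $\sum_{\boldsymbol a}\sigma^{\mathrm{bit}}_{\boldsymbol a|\boldsymbol x}$ is independent of $\boldsymbol x$ (the untrusted parties may signal among themselves). A qubit assemblage of minimal dimension is a family $\{\sigma_{a|x}\}_{a,x\in\{0,1\}}$ of positive semidefinite operators on $\mathbb C^2$ with $\sum_a\sigma_{a|x}$ a density operator independent of $x$. A 1W-LOCC (one-way local operation with classical communication from the trusted to the untrusted parties) maps $\sigma^{\mathrm{bit}}$ to the assemblage $\sigma'_{a_f|x_f}=\sum_{\boldsymbol a,\boldsymbol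 x,\omega}P_{\boldsymbol X|X_f,\Omega}(\boldsymbol x|x_f,\omega)\,P_{A_f|\boldsymbol A,\boldsymbol X,\Omega,X_f}(a_f|\boldsymbol a,\boldsymbol x,\omega,x_f)\,P_{\boldsymbol A|\boldsymbol X}(\boldsymbol a|\boldsymbol x)\,K_\omega|\psi(\boldsymbol a,\boldsymbol x)\rangle\langle\psi(\boldsymbol a,\boldsymbol x)|K_\omega^\dagger$, where $\{K_\omega\}$ are the Kraus operators (acting on $\mathbb C^2$) of a quantum instrument on the trusted party whose classical outcome $\omega$ is communicated to the untrusted parties, and $P_{\boldsymbol X|X_f,\Omega}$, $P_{A_f|\boldsymbol A,\boldsymbol X,\Omega,X_f}$ are conditional probability distributions (classical pre- and post-processing), with $a_f,x_f\in\{0,1\}$. *)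

(* Defs.v *)
From HB Require Import structures.
From mathcomp Require Import all_boot all_algebra.
From mathcomp.real_closed Require Import complex.
From mathcomp Require Import reals Rstruct.
Set Implicit Arguments. Unset Strict Implicit. Unset Printing Implicit Defensive.
Import GRing.Theory Num.Theory.
Local Open Scope ring_scope.

Definition C : numClosedFieldType := Rdefinitions.R[i].

Definition adj (m n : nat) (M : 'M[C]_(m, n)) : 'M[C]_(n, m) := (map_mx Num.conj M)^T.

Definition proj (psi : 'cV[C]_2) : 'M[C]_2 := psi *m adj psi.

Definition unit_vector (psi : 'cV[C]_2) : Prop := (adj psi *m psi) 0 0 = 1.

(* positive semidefinite operator on C^2 (over C this implies hermitian) *)
Definition psd (M : 'M[C]_2) : Prop := forall v : 'cV[C]_2, 0 <= (adj v *m M *m v) 0 0.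

Definition density (M : 'M[C]_2) : Prop := psd M /\ \tr M = 1.

Definition cond_prob (Y : Type) (D : finType) (p : Y -> D -> C) : Prop :=
  (forall y d, 0 <= p y d) /\ (forall y, \sum_(d : D) p y d = 1).

(* Joint inputs x = (x_1,...,x_{N-1}) and outputs a = (a_1,...,a_{N-1}) of the
   N-1 untrusted parties; party i has inputs in 'I_(mx i) and outputs in 'I_(ma i). *)
Definition inputs (n : nat) (mx : 'I_n -> nat) : finType :=
  {dffun forall i : 'I_n, 'I_(mx i)}.
Definition outputs (n : nat) (ma : 'I_n -> nat) : finType :=
  {dffun forall i : 'I_n, 'I_(ma i)}.

Definition pure_DI_assemblage (X A : finType)
    (P : X -> A -> C) (psi : A -> X -> 'cV[C]_2) : Prop :=
  cond_prob P /\
  (forall a x, unit_vector (psi a x)) /\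
  (forall x x', \sum_(a : A) P x a *: proj (psi a x)
              = \sum_(a : A) P x' a *: proj (psi a x')).

Definition min_qubit_assemblage (sigma : bool -> bool -> 'M[C]_2) : Prop :=
  (forall a x, psd (sigma a x)) /\
  (forall x x', \sum_(a : bool) sigma a x = \sum_(a : bool) sigma a x') /\
  (forall x, density (\sum_(a : bool) sigma a x)).

Definition instrument (W : finType) (K : W -> 'M[C]_2) : Prop :=
  \sum_(w : W) adj (K w) *m K w = 1%:M.

Definition one_way_LOCC_image (X A W : finType)
    (P : X -> A -> C) (psi : A -> X -> 'cV[C]_2) (K : W -> 'M[C]_2)
    (Pre : W * bool -> X -> C) (Post : A * X * W * bool -> bool -> C)
    (af xf : bool) : 'M[C]_2 :=
  \sum_(a : A) \sum_(x : X) \sum_(w : W)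
     (Pre (w, xf) x * Post (a, x, w, xf) af * P x a) *:
       (K w *m proj (psi a x) *m adj (K w)).

Definition LOCC_reachable (X A : finType)
    (P : X -> A -> C) (psi : A -> X -> 'cV[C]_2) (sigma : bool -> bool -> 'M[C]_2) : Prop :=
  exists (W : finType) (K : W -> 'M[C]_2)
         (Pre : W * bool -> X -> C) (Post : A * X * W * bool -> bool -> C),
    instrument K /\ cond_prob Pre /\ cond_prob Post /\
    forall af xf, one_way_LOCC_image P psi K Pre Post af xf = sigma af xf.

(* Main.v *)
Require Import Defs.
From mathcomp Require Import all_boot all_algebra.
From mathcomp Require Import ring zify.
From mathcomp.real_closed Require Import complex.
From mathcomp Require Import reals Rstruct.
Set Implicit Arguments. Unset Strict Implicit. Unset Printing Implicit Defensive.
Import GRing.Theory Num.Theory.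
Local Open Scope ring_scope.

Lemma adj_mul m n p (A : 'M[C]_(m, n)) (B : 'M[C]_(n, p)) :
  adj (A *m B) = adj B *m adj A.
Proof. by rewrite /adj (map_mxM Num.conj) trmx_mul. Qed.

Lemma adjK m n (A : 'M[C]_(m, n)) : adj (adj A) = A.
Proof. by apply/matrixP => i j; rewrite !mxE conjCK. Qed.

Definition ip (u v : 'cV[C]_2) : C := (adj u *m v) 0 0.
Definition form (u : 'cV[C]_2) (M : 'M[C]_2) : C := (adj u *m M *m u) 0 0.

Lemma ipE u v : ip u v = (u 0 0)^* * v 0 0 + (u 1 0)^* * v 1 0.
Proof.
rewrite /ip mxE big_ord_recl big_ord1 !mxE.
by rewrite (_ : lift ord0 ord0 = 1 :> 'I_2); last by apply/val_inj.
Qed.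

Lemma ip_conj u v : ip v u = (ip u v)^*.
Proof.
rewrite /ip.
have -> : adj v *m u = adj (adj u *m v) by rewrite adj_mul adjK.
by rewrite /adj !mxE.
Qed.

Lemma form_proj u v : form u (proj v) = ip u v * (ip u v)^*.
Proof.
rewrite /form /proj !mulmxA -(mulmxA (adj u *m v)) mxE big_ord1.
rewrite -ip_conj /ip.
have -> : (@ord0 0) = 0 by apply/val_inj.
by [].
Qed.

Lemma form_sum (I : finType) u (F : I -> 'M[C]_2) :
  form u (\sum_i F i) = \sum_i form u (F i).
Proof. by rewrite /form mulmx_sumr mulmx_suml summxE. Qed.

Lemma form_scale u k M : form u (k *: M) = k * form u M.
Proof. by rewrite /form -scalemxAr -scalemxAl mxE. Qed.

Lemma proj_mul (K : 'M[C]_2) v : K *m proj v *m adj K = proj (K *m v).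
Proof. by rewrite /proj adj_mul !mulmxA. Qed.

Lemma ip_mul (K : 'M[C]_2) u v : ip u (K *m v) = ip (adj K *m u) v.
Proof. by rewrite /ip adj_mul adjK mulmxA. Qed.

Lemma form_psd_ge0 u v : 0 <= form u (proj v).
Proof. by rewrite form_proj mul_conjC_ge0. Qed.

Definition mk2 (p q : C) : 'cV[C]_2 := \matrix_(i, j) (if val i == 0%N then p else q).

Lemma mk2E0 p q : mk2 p q 0 0 = p. Proof. by rewrite mxE. Qed.
Lemma mk2E1 p q : mk2 p q 1 0 = q. Proof. by rewrite mxE. Qed.

Lemma ord2P (i : 'I_2) : i = 0 \/ i = 1.
Proof. case: i => [[|[|k]] hk]; [left|right|by []]; exact/val_inj. Qed.

Lemma ip_mk2 p q p' q' : ip (mk2 p q) (mk2 p' q') = p^* * p' + q^* * q'.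
Proof. by rewrite ipE !mk2E0 !mk2E1. Qed.

Lemma ip_scale u k v : ip u (k *: v) = k * ip u v.
Proof. by rewrite /ip -scalemxAr mxE. Qed.

Definition nrm (z : C) := z * z^*.

Lemma nrm_ge0 z : 0 <= nrm z. Proof. exact: mul_conjC_ge0. Qed.

Lemma nrmM a b : nrm (a * b) = nrm a * nrm b.
Proof. by rewrite /nrm rmorphM mulrACA. Qed.

Lemma nrm_real a : a^* = a -> nrm a = a * a.
Proof. by rewrite /nrm => ->. Qed.

Lemma expand p q (phi : 'cV[C]_2) : p^* = p -> q^* = q -> p * p + q * q = 1 ->
  ip (mk2 (-q) p) phi = 0 -> phi = ip (mk2 p q) phi *: mk2 p q.
Proof.
move=> hp hq h1; rewrite !ipE !mk2E0 !mk2E1 rmorphN /= hp hq => h.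
apply/matrixP => i j; rewrite (ord1 j) mxE.
have [->|->] := ord2P i; rewrite ?mk2E0 ?mk2E1.
- apply: subr0_eq.
  have -> : phi 0 0 - (p * phi 0 0 + q * phi 1 0) * p
     = - q * (- q * phi 0 0 + p * phi 1 0) - phi 0 0 * (p * p + q * q - 1) by ring.
  by rewrite h h1 subrr !mulr0 subr0.
- apply: subr0_eq.
  have -> : phi 1 0 - (p * phi 0 0 + q * phi 1 0) * q
     = p * (- q * phi 0 0 + p * phi 1 0) - phi 1 0 * (p * p + q * q - 1) by ring.
  by rewrite h h1 subrr !mulr0 subr0.
Qed.

Lemma proj_entry (v : 'cV[C]_2) i j : proj v i j = v i 0 * (v j 0)^*.
Proof. by rewrite /proj mxE big_ord1 !mxE. Qed.

Lemma proj_sum p q : p^* = p -> q^* = q -> p * p + q * q = 1 ->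
  proj (mk2 p q) + proj (mk2 (-q) p) = 1%:M.
Proof.
move=> hp hq h1; apply/matrixP => i j; rewrite [LHS]mxE !proj_entry [RHS]mxE.
have [->|->] := ord2P i; have [->|->] := ord2P j;
  rewrite ?mk2E0 ?mk2E1 ?rmorphN /= ?hp ?hq /=.
- by rewrite -h1; ring.
- by ring.
- by ring.
- by rewrite -h1; ring.
Qed.

Definition D2 (u v : 'cV[C]_2) : C := u 0 0 * v 1 0 - u 1 0 * v 0 0.
Definition dK (K : 'M[C]_2) : C := K 0 0 * K 1 1 - K 0 1 * K 1 0.

Lemma mulE (K : 'M[C]_2) (u : 'cV[C]_2) i : (K *m u) i 0 = K i 0 * u 0 0 + K i 1 * u 1 0.
Proof.
rewrite mxE big_ord_recl big_ord1.
by rewrite (_ : lift ord0 ord0 = 1 :> 'I_2); last by apply/val_inj.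
Qed.

Lemma D2_mul K u v : D2 (K *m u) (K *m v) = dK K * D2 u v.
Proof. rewrite /D2 /dK !mulE; ring. Qed.

Lemma D2_scale a b p q p' q' : D2 (a *: mk2 p q) (b *: mk2 p' q') = a * b * (p * q' - q * p').
Proof. rewrite /D2 !mxE /=; ring. Qed.

Lemma sum_neq0 (I : finType) (F : I -> C) : \sum_i F i != 0 -> exists i, F i != 0.
Proof.
move=> H; case: (pickP (fun i => F i != 0)) => [i Hi|H0]; first by exists i.
by move: H; rewrite big1 ?eqxx // => i _; apply/eqP; move/negbFE: (H0 i).
Qed.

Lemma conjN (x : C) : (- x)^* = - x^*. Proof. by rewrite rmorphN. Qed.
Lemma conj0 : (0 : C)^* = 0. Proof. by rewrite rmorph0. Qed.
Lemma conj1 : (1 : C)^* = 1. Proof. by rewrite rmorph1. Qed.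

Section Key.
Variables (c s : C).
Hypotheses (hc : c^* = c) (hs : s^* = s) (c0 : c != 0) (s0 : s != 0)
  (cs1 : c * c + s * s = 1).

Definition pq (af xf : bool) : C * C :=
  if xf then (if af then (-s, c) else (c, s)) else (if af then (0, 1) else (1, 0)).
Definition vb af xf := mk2 (pq af xf).1 (pq af xf).2.
Definition vp af xf := mk2 (- (pq af xf).2) (pq af xf).1.
Definition target (af xf : bool) : 'M[C]_2 := 2^-1 *: proj (vb af xf).

Lemma pq_re1 af xf : ((pq af xf).1)^* = (pq af xf).1.
Proof. by case: af; case: xf; rewrite /= ?conjN ?conj0 ?conj1 ?hc ?hs. Qed.
Lemma pq_re2 af xf : ((pq af xf).2)^* = (pq af xf).2.
Proof. by case: af; case: xf; rewrite /= ?conjN ?conj0 ?conj1 ?hc ?hs. Qed.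
Lemma pq_one af xf : (pq af xf).1 * (pq af xf).1 + (pq af xf).2 * (pq af xf).2 = 1.
Proof.
case: af; case: xf; rewrite /= ?mulr0 ?mulr1 ?add0r ?addr0 //.
by rewrite mulrNN addrC.
Qed.

Lemma ip_vp_vb af xf : ip (vp af xf) (vb af xf) = 0.
Proof. by rewrite /vp /vb ip_mk2 conjN pq_re1 pq_re2; ring. Qed.

Lemma ip_vb_vb af xf : ip (vb af xf) (vb af xf) = 1.
Proof. by rewrite /vb ip_mk2 pq_re1 pq_re2 pq_one. Qed.

Lemma sum_target xf : \sum_(af : bool) target af xf = 2^-1 *: 1%:M.
Proof.
rewrite -scaler_sumr big_bool /vb; congr (_ *: _).
have := proj_sum (pq_re1 false xf) (pq_re2 false xf) (pq_one false xf).
by case: xf; rewrite /= ?oppr0 addrC.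
Qed.

Lemma target_assemblage : min_qubit_assemblage target.
Proof.
split; [|split].
- move=> a x v; rewrite -/(form v _) form_scale form_proj.
  by rewrite mulr_ge0 ?invr_ge0 ?ler0n ?mul_conjC_ge0.
- by move=> x x'; rewrite !sum_target.
- move=> x; split.
  + move=> v; rewrite -/(form v _) form_sum; apply: sumr_ge0 => a _.
    by rewrite form_scale form_proj mulr_ge0 ?invr_ge0 ?ler0n ?mul_conjC_ge0.
  + by rewrite sum_target mxtraceZ mxtrace1 mulVf // pnatr_eq0.
Qed.
End Key.

Section Vals.
Variables (c s : C).
Hypotheses (hc : c^* = c) (hs : s^* = s) (cs1 : c * c + s * s = 1).
Let v := vb c s.
Lemma ipv_gen af xf af' xf' : ip (v af xf) (v af' xf') =
  (pq c s af xf).1 * (pq c s af' xf').1 + (pq c s af xf).2 * (pq c s af' xf').2.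
Proof. by rewrite /v /vb ip_mk2 (pq_re1 hc hs) (pq_re2 hc hs). Qed.
Lemma ip1 : ip (v true false) (v false false) = 0.
Proof. rewrite ipv_gen /=; ring. Qed.
Lemma ip2 : ip (v true false) (v true true) = c.
Proof. rewrite ipv_gen /=; ring. Qed.
Lemma ip3 : ip (v true false) (v false true) = s.
Proof. rewrite ipv_gen /=; ring. Qed.
Lemma ip4 : ip (v false true) (v true false) = s.
Proof. rewrite ipv_gen /=; ring. Qed.
Lemma ip5 : ip (v false true) (v false false) = c.
Proof. rewrite ipv_gen /=; ring. Qed.
Lemma ip6 : ip (v false true) (v true true) = 0.
Proof. rewrite ipv_gen /=; ring. Qed.
Lemma ip7 : ip (v true true) (v true false) = c.
Proof. rewrite ipv_gen /=; ring. Qed.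
Lemma ip8 : ip (v true true) (v false false) = - s.
Proof. rewrite ipv_gen /=; ring. Qed.
Lemma ip9 : ip (v true true) (v false true) = 0.
Proof. rewrite ipv_gen /=; ring. Qed.
Lemma nrm0 : nrm 0 = 0. Proof. by rewrite /nrm mul0r. Qed.
Lemma nrm1 : nrm 1 = 1. Proof. by rewrite /nrm conj1 mulr1. Qed.
Lemma nrmc : nrm c = c * c. Proof. by rewrite /nrm hc. Qed.
Lemma nrms : nrm s = s * s. Proof. by rewrite /nrm hs. Qed.
Lemma nrmNs : nrm (- s) = s * s. Proof. by rewrite /nrm conjN hs mulrNN. Qed.
End Vals.

Definition D4 (f1 f2 f3 f4 : 'cV[C]_2) : C := D2 f1 f3 * D2 f2 f4 / (D2 f1 f4 * D2 f2 f3).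

Lemma sum_bool (F : bool -> C) : \sum_b F b = F true + F false.
Proof. by rewrite big_bool. Qed.

Section LOCC.
Variables (c s : C).
Hypotheses (hc : c^* = c) (hs : s^* = s) (c0 : c != 0) (s0 : s != 0)
  (cs1 : c * c + s * s = 1).
Variables (X A : finType) (P : X -> A -> C) (psi : A -> X -> 'cV[C]_2).
Hypothesis Hpure : pure_DI_assemblage P psi.
Variables (W : finType) (K : W -> 'M[C]_2) (Pre : W * bool -> X -> C)
  (Post : A * X * W * bool -> bool -> C).
Hypotheses (HPre : cond_prob Pre) (HPost : cond_prob Post)
  (Himg : forall af xf, one_way_LOCC_image P psi K Pre Post af xf = target c s af xf).

Definition coef w a x af xf := Pre (w, xf) x * Post (a, x, w, xf) af * P x a.
Definition Kv w a x := K w *m psi a x.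

Lemma coef_ge0 w a x af xf : 0 <= coef w a x af xf.
Proof.
by rewrite /coef !mulr_ge0 //; [apply: HPre.1|apply: HPost.1|apply: Hpure.1.1].
Qed.

Lemma form_img u af xf : form u (target c s af xf) =
  \sum_w \sum_a \sum_x coef w a x af xf * nrm (ip u (Kv w a x)).
Proof.
rewrite -Himg /one_way_LOCC_image form_sum.
under eq_bigr do rewrite form_sum.
under eq_bigr do under eq_bigr do rewrite form_sum.
under eq_bigr do under eq_bigr do under eq_bigr do rewrite form_scale proj_mul form_proj.
under eq_bigr do rewrite exchange_big.
by rewrite exchange_big.
Qed.

Lemma term_ge0 u w a x af xf : 0 <= coef w a x af xf * nrm (ip u (Kv w a x)).
Proof. by rewrite mulr_ge0 ?coef_ge0 ?nrm_ge0. Qed.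

Lemma vanish w a x af xf : coef w a x af xf != 0 -> ip (vp c s af xf) (Kv w a x) = 0.
Proof.
move=> Hc.
have H0 := form_img (vp c s af xf) af xf.
rewrite /target form_scale form_proj (ip_vp_vb hc hs) conj0 !mulr0 in H0.
have h1 := psumr_eq0P (fun w _ => sumr_ge0 _ (fun a _ => sumr_ge0 _ (fun x _ => term_ge0 _ w a x af xf))) (esym H0) (i := w) isT.
have h2 := psumr_eq0P (fun a _ => sumr_ge0 _ (fun x _ => term_ge0 _ w a x af xf)) h1 (i := a) isT.
have h3 := psumr_eq0P (fun x _ => term_ge0 _ w a x af xf) h2 (i := x) isT.
move/eqP: h3; rewrite mulf_eq0 (negbTE Hc) /= /nrm mul_conjC_eq0.
by move/eqP.
Qed.

Definition t w af xf := \sum_a \sum_x coef w a x af xf * nrm (ip (vb c s af xf) (Kv w a x)).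

Lemma t_ge0 w af xf : 0 <= t w af xf.
Proof. by apply: sumr_ge0 => a _; apply: sumr_ge0 => x _; apply: term_ge0. Qed.

Lemma S_eq w af xf u : \sum_a \sum_x coef w a x af xf * nrm (ip u (Kv w a x))
   = t w af xf * nrm (ip u (vb c s af xf)).
Proof.
rewrite /t mulr_suml; apply: eq_bigr => a _; rewrite mulr_suml; apply: eq_bigr => x _.
have [->|Hc] := eqVneq (coef w a x af xf) 0; first by rewrite !mul0r.
rewrite {1}(expand (pq_re1 hc hs af xf) (pq_re2 hc hs af xf) (pq_one cs1 af xf) (vanish Hc)).
by rewrite ip_scale nrmM mulrA.
Qed.

Lemma q_indep w u :
  \sum_af t w af false * nrm (ip u (vb c s af false))
  = \sum_af t w af true * nrm (ip u (vb c s af true)).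
Proof.
pose h x := \sum_a P x a * nrm (ip u (Kv w a x)).
have hE x : h x = form (adj (K w) *m u) (\sum_a P x a *: proj (psi a x)).
  rewrite /h form_sum; apply: eq_bigr => a _.
  by rewrite form_scale form_proj /Kv ip_mul.
have hc' x x' : h x = h x' by rewrite !hE (Hpure.2.2 x x').
have E xf : \sum_af t w af xf * nrm (ip u (vb c s af xf)) = \sum_x Pre (w, xf) x * h x.
  under eq_bigr => af _ do rewrite -(S_eq w af xf u).
  rewrite exchange_big; under eq_bigr do rewrite exchange_big.
  rewrite exchange_big; apply: eq_bigr => x _.
  rewrite /h mulr_sumr; apply: eq_bigr => a _.
  rewrite -mulr_suml /coef -mulr_suml -mulr_sumr HPost.2 mulr1.
  by rewrite mulrA.
rewrite !E.
case: (pickP (@predT X)) => [x0 _|X0].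
  have F xf : \sum_x Pre (w, xf) x * h x = h x0.
    under eq_bigr do rewrite (hc' _ x0).
    by rewrite -mulr_suml HPre.2 mul1r.
  by rewrite !F.
have := HPre.2 (w, false); rewrite big_pred0 // => /eqP.
by rewrite eq_sym oner_eq0.
Qed.

Lemma t_pos : exists w, forall af xf, t w af xf != 0.
Proof.
have H := form_img (vb c s false false) false false.
rewrite /target form_scale form_proj (ip_vb_vb hc hs cs1) in H.
have : \sum_w t w false false != 0.
  rewrite /t -H conj1 !mulr1 invr_eq0 pnatr_eq0 //.
case/sum_neq0 => w Hw; exists w.
have tff : 0 < t w false false by rewrite lt0r Hw t_ge0.
have cc : 0 < c * c by rewrite -{2}hc mul_conjC_gt0.
have ss : 0 < s * s by rewrite -{2}hs mul_conjC_gt0.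
have sg : 0 <= s * s by have := mul_conjC_ge0 s; rewrite hs.
have cg : 0 <= c * c by have := mul_conjC_ge0 c; rewrite hc.
have e u := q_indep w u.
have e1 : t w true false = t w true true * (c * c) + t w false true * (s * s).
  have := e (vb c s true false).
  rewrite !sum_bool (ip_vb_vb hc hs cs1) (ip1 hc hs) (ip2 hc hs) (ip3 hc hs).
  by rewrite nrm0 nrm1 (nrmc hc) (nrms hs) mulr0 addr0 mulr1.
have e2 : t w true false * (s * s) + t w false false * (c * c) = t w false true.
  have := e (vb c s false true).
  rewrite !sum_bool (ip_vb_vb hc hs cs1) (ip4 hc hs) (ip5 hc hs) (ip6 hc hs).
  by rewrite nrm0 nrm1 (nrmc hc) (nrms hs) mulr0 add0r mulr1.
have e3 : t w true false * (c * c) + t w false false * (s * s) = t w true true.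
  have := e (vb c s true true).
  rewrite !sum_bool (ip_vb_vb hc hs cs1) (ip7 hc hs) (ip8 hc hs) (ip9 hc hs).
  by rewrite nrm0 nrm1 (nrmc hc) (nrmNs hs) mulr0 addr0 mulr1.
have tft : 0 < t w false true.
  rewrite -e2; exact: (ltr_wpDl (mulr_ge0 (t_ge0 w true false) sg) (mulr_gt0 tff cc)).
have ttt : 0 < t w true true.
  rewrite -e3; exact: (ltr_wpDl (mulr_ge0 (t_ge0 w true false) cg) (mulr_gt0 tff ss)).
have ttf : 0 < t w true false.
  rewrite e1; exact: (ltr_wpDl (mulr_ge0 (t_ge0 w true true) cg) (mulr_gt0 tft ss)).
move=> [] []; [exact: (lt0r_neq0 ttt)|exact: (lt0r_neq0 ttf)|exact: (lt0r_neq0 tft)|exact: (lt0r_neq0 tff)].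
Qed.
End LOCC.

Section Cross.
Variables (c s : C).
Hypotheses (hc : c^* = c) (hs : s^* = s) (c0 : c != 0) (s0 : s != 0)
  (cs1 : c * c + s * s = 1).
Variables (X A : finType) (P : X -> A -> C) (psi : A -> X -> 'cV[C]_2).
Hypothesis Hpure : pure_DI_assemblage P psi.
Variables (W : finType) (K : W -> 'M[C]_2) (Pre : W * bool -> X -> C)
  (Post : A * X * W * bool -> bool -> C).
Hypotheses (HPre : cond_prob Pre) (HPost : cond_prob Post)
  (Himg : forall af xf, one_way_LOCC_image P psi K Pre Post af xf = target c s af xf).

Lemma get_vec w af xf : t c s P psi K Pre Post w af xf != 0 ->
  exists a x mu, mu != 0 /\ K w *m psi a x = mu *: vb c s af xf.
Proof.
rewrite /t => /sum_neq0 [a /sum_neq0 [x Hx]].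
move: Hx; rewrite mulf_eq0 negb_or => /andP[Hc Hn].
exists a, x, (ip (vb c s af xf) (Kv psi K w a x)); split.
  by move: Hn; rewrite /nrm mul_conjC_eq0.
exact: (expand (pq_re1 hc hs af xf) (pq_re2 hc hs af xf) (pq_one cs1 af xf)
          (vanish hc hs Hpure HPre HPost Himg Hc)).
Qed.

Lemma cross : exists tau : (A * X) * (A * X) * ((A * X) * (A * X)),
  D4 (psi tau.1.1.1 tau.1.1.2) (psi tau.1.2.1 tau.1.2.2)
     (psi tau.2.1.1 tau.2.1.2) (psi tau.2.2.1 tau.2.2.2) = - (s / c) ^+ 2.
Proof.
have [w Hw] := t_pos hc hs c0 s0 cs1 Hpure HPre HPost Himg.
have [a1 [x1 [m1 [n1 E1]]]] := get_vec (Hw false false).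
have [a2 [x2 [m2 [n2 E2]]]] := get_vec (Hw true false).
have [a3 [x3 [m3 [n3 E3]]]] := get_vec (Hw false true).
have [a4 [x4 [m4 [n4 E4]]]] := get_vec (Hw true true).
exists ((a1, x1), (a2, x2), ((a3, x3), (a4, x4))) => /=.
set k := dK (K w).
have k13 : k * D2 (psi a1 x1) (psi a3 x3) = m1 * m3 * s.
  by rewrite -D2_mul E1 E3 /vb D2_scale /=; ring.
have k24 : k * D2 (psi a2 x2) (psi a4 x4) = m2 * m4 * s.
  by rewrite -D2_mul E2 E4 /vb D2_scale /=; ring.
have k14 : k * D2 (psi a1 x1) (psi a4 x4) = m1 * m4 * c.
  by rewrite -D2_mul E1 E4 /vb D2_scale /=; ring.
have k23 : k * D2 (psi a2 x2) (psi a3 x3) = - (m2 * m3 * c).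
  by rewrite -D2_mul E2 E3 /vb D2_scale /=; ring.
have : k * D2 (psi a1 x1) (psi a4 x4) != 0 by rewrite k14 !mulf_neq0.
rewrite mulf_eq0 negb_or => /andP[k0 _].
rewrite /D4.
have -> : D2 (psi a1 x1) (psi a3 x3) = m1 * m3 * s / k by rewrite -k13 mulrC mulKf.
have -> : D2 (psi a2 x2) (psi a4 x4) = m2 * m4 * s / k by rewrite -k24 mulrC mulKf.
have -> : D2 (psi a1 x1) (psi a4 x4) = m1 * m4 * c / k by rewrite -k14 mulrC mulKf.
have -> : D2 (psi a2 x2) (psi a3 x3) = - (m2 * m3 * c) / k by rewrite -k23 mulrC mulKf.
by field; rewrite c0 k0 n1 n2 n3 n4.
Qed.
End Cross.

Lemma aux_nat (n m : nat) : (2 <= n)%N -> (2 <= m)%N -> ((n * n - 1) * (2 * m) = (m * m - 1) * (2 * n))%N -> n = m.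
Proof.
move=> hn hm H.
have e1 : (n * n - 1 + 1 = n * n)%N by nia.
have e2 : (m * m - 1 + 1 = m * m)%N by nia.
move: H e1 e2; set a := (n * n - 1)%N; set b := (m * m - 1)%N => H e1 e2.
case: (ltngtP n m) => // h.
- have [k hk] : exists k, m = (n + k.+1)%N by exists (m - n).-1; lia.
  subst m. nia.
- have [k hk] : exists k, n = (m + k.+1)%N by exists (n - m).-1; lia.
  subst n. nia.
Qed.

Lemma r_ge0 (n : nat) : 0 <= ((n * n - 1)%:R / (2 * n)%:R : C).
Proof. by rewrite divr_ge0 ?ler0n. Qed.

Lemma r_inj (n m : nat) : (2 <= n)%N -> (2 <= m)%N ->
  - ((n * n - 1)%:R / (2 * n)%:R : C) ^+ 2 = - ((m * m - 1)%:R / (2 * m)%:R) ^+ 2 ->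
  n = m.
Proof.
move=> hn hm /oppr_inj /eqP; rewrite eqrXn2 // ?r_ge0 //.
rewrite eqr_div ?pnatr_eq0; last by apply/eqP; lia.
  by rewrite -!natrM eqr_nat => /eqP H; apply: aux_nat.
by apply/eqP; lia.
Qed.

Unset Implicit Arguments.

Theorem theoremS2 (N : nat) (hN : (2 <= N)%N)
  (mx ma : 'I_(N.-1) -> nat)
  (P : inputs mx -> outputs ma -> C) (psi : outputs ma -> inputs mx -> 'cV[C]_2) :
  pure_DI_assemblage P psi ->
  ~ (forall sigma : bool -> bool -> 'M[C]_2,
       min_qubit_assemblage sigma -> LOCC_reachable P psi sigma).
Proof.
move=> Hpure Hall.
pose T : finType := ((outputs ma * inputs mx) * (outputs ma * inputs mx) *
           ((outputs ma * inputs mx) * (outputs ma * inputs mx)))%type.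
pose g (tau : T) := D4 (psi tau.1.1.1 tau.1.1.2) (psi tau.1.2.1 tau.1.2.2)
     (psi tau.2.1.1 tau.2.1.2) (psi tau.2.2.1 tau.2.2.2).
pose val (n : nat) : C := - ((n * n - 1)%:R / (2 * n)%:R) ^+ 2.
have key n : (2 <= n)%N -> exists tau : T, g tau = val n.
  move=> n2.
  pose c : C := (2 * n)%:R / (n * n + 1)%:R.
  pose s : C := (n * n - 1)%:R / (n * n + 1)%:R.
  have nn0 : (n * n + 1)%:R != 0 :> C by rewrite pnatr_eq0 addn1.
  have n20 : (2 * n)%:R != 0 :> C by rewrite pnatr_eq0; apply/eqP; lia.
  have nn0' : n%:R * n%:R + 1 != 0 :> C by move: nn0; rewrite natrD natrM.
  have n0 : n%:R != 0 :> C by rewrite pnatr_eq0; apply/eqP; lia.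
  have n10 : (n * n - 1)%:R != 0 :> C by rewrite pnatr_eq0; apply/eqP; nia.
  have hc : c^* = c by rewrite conj_Creal // rpredM ?rpredV ?realn.
  have hs : s^* = s by rewrite conj_Creal // rpredM ?rpredV ?realn.
  have c0 : c != 0 by rewrite mulf_neq0 ?invr_eq0.
  have s0 : s != 0 by rewrite mulf_neq0 ?invr_eq0.
  have hn : ((2 * n) * (2 * n) + (n * n - 1) * (n * n - 1) = (n * n + 1) * (n * n + 1))%N.
    by nia.
  have hC : (2 * n)%:R * (2 * n)%:R + (n * n - 1)%:R * (n * n - 1)%:R
            = (n * n + 1)%:R * (n * n + 1)%:R :> C by rewrite -!natrM -natrD hn.
  have cs1 : c * c + s * s = 1.
    have -> : c * c + s * s = ((2 * n)%:R * (2 * n)%:R + (n * n - 1)%:R * (n * n - 1)%:R)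
                / ((n * n + 1)%:R * (n * n + 1)%:R).
      rewrite /c /s; field.
      exact: nn0'.
    by rewrite hC divff // mulf_neq0.
  have [W [K [Pre [Post [_ [HPre [HPost Himg]]]]]]] :=
    Hall (target c s) (target_assemblage hc hs cs1).
  have [tau Ht] := cross hc hs c0 s0 cs1 Hpure HPre HPost Himg.
  exists tau; rewrite /g Ht /val /c /s; congr (- _ ^+ 2); field.
  by rewrite n0 nn0'.
have sub : {subset map val (iota 2 (#|T|.+1)) <= codom g}.
  move=> z /mapP [n]; rewrite mem_iota => /andP [n2 _] ->.
  have [tau <-] := key n n2.
  exact: codom_f.
have U : uniq (map val (iota 2 (#|T|.+1))).
  rewrite map_inj_in_uniq ?iota_uniq // => n m.
  rewrite !mem_iota => /andP [n2 _] /andP [m2 _].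
  exact: r_inj.
have := uniq_leq_size U sub.
by rewrite size_map size_iota size_codom ltnn.
Qed.
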